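(* Let $f$ and $g$ be balanced flows such that the product $fg$ is defined. Then $fg$ is balanced and $h(fg)\le\max\{h(f),h(g)\}$. Consequently the set $\mathcal B$ of balanced wirings is closed under products of wirings (and is a semiring).
   Context: Terms: first-order terms built from an infinite set of variables, a binary function symbol $\bullet$ written infix, infinitely many constant symbols including a distinguished constant $\star$, and for each $n\ge1$ at least one $n$-ary function symbol. $\mathrm{var}(t)$ is the set of variables of $t$. The height $h(t)$ is the maximal distance from the root to a node in the tree of $t$; the height of an occurrence of a variable in $t$ is its distance from the root. A renaming is a bijective substitution mapping variables to variables. A flow is a pair of terms written $t\leftarrow u$ with $\mathrm{var}(t)\subseteq\mathrm{var}(u)$, considered up to renaming. The product of flows $u\leftarrow v$ and $t\leftarrow w$ (representatives chosen with disjoint variable sets) is defined iff $v$ and $t$ are unifiable, and then equals $u\theta\leftarrow w\theta$ with $\theta$ a most general unifier of $v,t$. A wiring is a finite set of flows; product of wirings $FG=\{fg: f\in F,g\in G, fg\text{ defined}\}$, sum is union, $0$ is the empty wiring. A flow $t\leftarrow u$ is balanced if for every variable $x$, all occurrences of $x$ in $t$ and in $u$ have the same height; a wiring is balanced if all its flows are balanced; $\mathcal B$ is the set of balanced wirings. The height of a flow $t\leftarrow u$ is $\max\{h(t),h(u)\}$. A semiring is a set of wirings containing $0$ and closed under finite sums and products. *)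

(* Defs.v *)
From Stdlib Require Import List Arith.
Import ListNotations.
Set Implicit Arguments.

Section Terms.
(* F : the type of function symbols (arity = number of arguments). *)
Variable F : Type.

Inductive term : Type :=
| Var : nat -> term
| Fn : F -> list term -> term.

Inductive occ_at (x : nat) : nat -> term -> Prop :=
| occ_var : occ_at x 0 (Var x)
| occ_fn : forall (f : F) (args : list term) (a : term) (d : nat),
    In a args -> occ_at x d a -> occ_at x (S d) (Fn f args).

Definition occurs (x : nat) (t : term) : Prop := exists d, occ_at x d t.

Fixpoint height (t : term) : nat :=
  match t with
  | Var _ => 0
  | Fn _ args =>
      match args with
      | [] => 0
      | _ => S (list_max (map height args))
      end
  end.

Definition subst := nat -> term.

Fixpoint apply (s : subst) (t : term) : term :=
  match t with
  | Var x => s x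
  | Fn f args => Fn f (map (apply s) args)
  end.

Definition unifier (th : subst) (v t : term) : Prop := apply th v = apply th t.

Definition mgu (th : subst) (v t : term) : Prop :=
  unifier th v t /\
  forall sg : subst, unifier sg v t ->
    exists rho : subst, forall x, sg x = apply rho (th x).

Definition renaming (r : nat -> nat) : Prop :=
  exists r', (forall x, r' (r x) = x) /\ (forall x, r (r' x) = x).

Definition rename (r : nat -> nat) (t : term) : term := apply (fun x => Var (r x)) t.

(* a flow t <- u is represented by the pair (t, u) *)
Definition flow := (term * term)%type.

Definition is_flow (f : flow) : Prop :=
  forall x, occurs x (fst f) -> occurs x (snd f).

Definition flow_occurs (x : nat) (f : flow) : Prop :=
  occurs x (fst f) \/ occurs x (snd f).

Definition flow_equiv (f f' : flow) : Prop :=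
  exists r, renaming r /\ fst f' = rename r (fst f) /\ snd f' = rename r (snd f).

(* h is (a representative of) the product fg, which is then defined:
   (u <- v)(t <- w) = u th <- w th, with representatives having disjoint
   variables and th a most general unifier of v and t *)
Definition flow_prod (f g h : flow) : Prop :=
  exists (f' g' : flow) (th : subst),
    flow_equiv f f' /\ flow_equiv g g' /\
    (forall x, flow_occurs x f' -> ~ flow_occurs x g') /\
    mgu th (snd f') (fst g') /\
    flow_equiv (apply th (fst f'), apply th (snd g')) h.

Definition prod_defined (f g : flow) : Prop := exists h, flow_prod f g h.

Definition balanced (f : flow) : Prop :=
  forall x d d',
    (occ_at x d (fst f) \/ occ_at x d (snd f)) ->
    (occ_at x d' (fst f) \/ occ_at x d' (snd f)) -> d = d'.

Definition flow_height (f : flow) : nat := Nat.max (height (fst f)) (height (snd f)).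

(* wirings: finite sets of flows (each up to renaming), as lists of representatives *)
Definition wiring := list flow.

Definition is_wiring (W : wiring) : Prop := forall f, In f W -> is_flow f.

Definition balanced_wiring (W : wiring) : Prop := forall f, In f W -> balanced f.

(* H represents the product FG = { fg | f in F, g in G, fg defined } *)
Definition wiring_prod (W1 W2 H : wiring) : Prop :=
  (forall h, In h H -> exists f g, In f W1 /\ In g W2 /\ flow_prod f g h) /\
  (forall f g, In f W1 -> In g W2 -> prod_defined f g ->
     exists h, In h H /\ flow_prod f g h).

Definition wiring_sum (W1 W2 H : wiring) : Prop :=
  forall f, (exists f', In f' H /\ flow_equiv f f') <->
            (exists f', (In f' W1 \/ In f' W2) /\ flow_equiv f f').

End Terms.

(* Main.v *)
Require Import Defs.
From Stdlib Require Import List Arith Lia Cantor ClassicalEpsilon.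
Import ListNotations.

Section S.
Variable Fs : Type.
Notation term := (term Fs).
Notation V := (Var Fs).

Fixpoint term_ind' (P : term -> Prop) (HV : forall x, P (V x))
  (HF : forall f args, Forall P args -> P (Fn f args)) (t : term) : P t :=
  match t with
  | Var _ x => HV x
  | Fn f args => HF f args
      ((fix go l := match l return Forall P l with
                    | [] => Forall_nil _
                    | a :: l => Forall_cons _ (term_ind' P HV HF a) (go l) end) args)
  end.

Lemma occ_apply (s : subst Fs) t : forall a d, occ_at a d (apply s t) ->
  exists x d1 d2, occ_at x d1 t /\ occ_at a d2 (s x) /\ d = d1 + d2.
Proof.
  induction t as [x|f args IH] using term_ind'; intros a d H.
  - exists x, 0, d. simpl in H. repeat split; auto. constructor.
  - simpl in H. inversion H; subst.
    match goal with Hi : In _ _, Ho : occ_at _ _ _ |- _ => rename Hi into Hin; rename Ho into Hoc end.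
    apply in_map_iff in Hin as [b [<- Hb]].
    rewrite Forall_forall in IH.
    destruct (IH b Hb a d0 Hoc) as (x & d1 & d2 & H1 & H4 & ->).
    exists x, (S d1), d2. repeat split; auto. econstructor; eauto.
Qed.

Lemma occ_apply_back (s : subst Fs) x d1 t : occ_at x d1 t -> forall a d2,
  occ_at a d2 (s x) -> occ_at a (d1 + d2) (apply s t).
Proof.
  induction 1; intros; simpl; auto.
  econstructor. apply in_map; eauto. eauto.
Qed.

Lemma height_arg (f : Fs) (args : list term) a : In a args -> height a + 1 <= height (Fn f args).
Proof.
  intro H. destruct args as [|b l]; [destruct H|].
  cbn [height]. remember (b :: l) as L.
  assert (Hm : list_max (map (@height Fs) L) <= list_max (map (@height Fs) L)) by lia.
  apply list_max_le in Hm. rewrite Forall_forall in Hm.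
  specialize (Hm (height a) (in_map _ _ _ H)). lia.
Qed.

Lemma height_Fn_bound (f : Fs) (args : list term) k M :
  (forall a, In a args -> height a + S k <= M) -> k <= M -> height (Fn f args) + k <= M.
Proof.
  intros H Hk. destruct args as [|b l]; [simpl; lia|].
  cbn [height]. remember (b :: l) as L.
  assert (list_max (map (@height Fs) L) <= M - S k).
  { apply list_max_le, Forall_forall. intros n Hn.
    apply in_map_iff in Hn as [c [<- Hc]]. specialize (H c Hc). lia. }
  assert (L <> []) by (subst; discriminate).
  destruct L as [|c L']; [congruence|]. specialize (H c (or_introl eq_refl)). lia.
Qed.

Lemma occ_height x d (t : term) : occ_at x d t -> d <= height t.
Proof.
  induction 1; [simpl; lia|]. pose proof (height_arg f args a H). lia.
Qed.

Lemma height_rename r (t : term) : height (rename r t) = height t.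
Proof.
  unfold rename. induction t as [x|f args IH] using term_ind'; [reflexivity|].
  simpl. rewrite map_map. rewrite Forall_forall in IH.
  rewrite (map_ext_in _ (@height Fs) args IH). destruct args; reflexivity.
Qed.

Lemma occ_rename r a d (t : term) : occ_at a d (rename r t) -> exists x, occ_at x d t /\ a = r x.
Proof.
  intro H. apply occ_apply in H as (x & d1 & d2 & H1 & H2 & ->).
  inversion H2; subst. exists x. rewrite Nat.add_0_r. auto.
Qed.

Lemma occ_rename_back r x d (t : term) : occ_at x d t -> occ_at (r x) d (rename r t).
Proof.
  intro H. pose proof (occ_apply_back (fun x => V (r x)) x d t H (r x) 0 (occ_var _ (r x))).
  rewrite Nat.add_0_r in H0. exact H0.
Qed.

Lemma balanced_equiv (p q : flow Fs) : flow_equiv p q -> balanced p -> balanced q.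
Proof.
  intros (r & [r' [H1 H2]] & E1 & E2) Hb x d d' Ha Hb'.
  destruct p as [p1 p2], q as [q1 q2]; simpl in *; subst.
  assert (K : forall d, occ_at x d (rename r p1) \/ occ_at x d (rename r p2) ->
     occ_at (r' x) d p1 \/ occ_at (r' x) d p2).
  { intros e [He|He]; apply occ_rename in He as [y [Hy ->]]; rewrite H1; auto. }
  exact (Hb (r' x) d d' (K _ Ha) (K _ Hb')).
Qed.

Lemma balanced_equiv_back (p q : flow Fs) : flow_equiv p q -> balanced q -> balanced p.
Proof.
  intros (r & _ & E1 & E2) Hb x d d' Ha Hb'.
  destruct p as [p1 p2], q as [q1 q2]; simpl in *; subst.
  apply (Hb (r x));
  [destruct Ha as [Hc|Hc] | destruct Hb' as [Hc|Hc]];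
  solve [ left; apply occ_rename_back; assumption | right; apply occ_rename_back; assumption ].
Qed.

Fixpoint tagd (k : nat) (t : term) : term :=
  match t with
  | Var _ a => V (Cantor.to_nat (a, k))
  | Fn f args => Fn f (map (tagd (S k)) args)
  end.

Fixpoint cut (n : nat) (t : term) : term :=
  match n with
  | 0 => match t with
         | Var _ a => V a
         | Fn f [] => Fn f []
         | Fn _ (_ :: _) => V 0
         end
  | S n' => match t with
            | Var _ a => V a
            | Fn f args => Fn f (map (cut n') args)
            end
  end.

Lemma tag_apply (D : nat -> nat) (th : subst Fs) v : forall k,
  (forall x d, occ_at x d v -> D x = k + d) ->
  tagd k (apply th v) = apply (fun x => tagd (D x) (th x)) v.
Proof.
  induction v as [x|f args IH] using term_ind'; intros k H.
  - simpl. rewrite (H x 0 (occ_var _ x)). f_equal. lia.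
  - simpl. f_equal. rewrite map_map. apply map_ext_in. intros a Ha.
    rewrite Forall_forall in IH. apply IH; auto.
    intros x d Hd. rewrite (H x (S d)). lia. econstructor; eauto.
Qed.

Lemma tag_rho a p t : occ_at a p t -> forall k (rho : subst Fs),
  tagd k t = apply rho t -> rho a = V (Cantor.to_nat (a, k + p)).
Proof.
  induction 1; intros k rho E.
  - simpl in E. rewrite Nat.add_0_r. auto.
  - simpl in E. injection E as E.
    assert (tagd (S k) a0 = apply rho a0).
    { clear -E H. induction args; [destruct H|]. simpl in E. injection E as E1 E2.
      destruct H; subst; auto. }
    rewrite (IHocc_at _ _ H1). f_equal. f_equal. f_equal. lia.
Qed.

Lemma cut_apply (D : nat -> nat) (th : subst Fs) M v : forall k,
  (forall x d, occ_at x d v -> D x = k + d) -> height v + k <= M ->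
  cut (M - k) (apply th v) = apply (fun x => cut (M - D x) (th x)) v.
Proof.
  induction v as [x|f args IH] using term_ind'; intros k H Hh.
  - simpl. rewrite (H x 0 (occ_var _ x)). f_equal. lia.
  - destruct args as [|b l].
    + destruct (M - k); reflexivity.
    + assert (Hb := height_arg f (b :: l) b (or_introl eq_refl)).
      destruct (M - k) as [|n] eqn:En; [lia|].
      remember (b :: l) as L. simpl apply. cbn [cut]. f_equal. rewrite map_map. apply map_ext_in. intros a Ha.
      rewrite Forall_forall in IH. replace n with (M - S k) by lia. apply IH; auto.
      * intros x d Hd. rewrite (H x (S d)). lia. econstructor; eauto.
      * pose proof (height_arg f _ a Ha). lia.
Qed.

Lemma cut_height n : forall t (rho : subst Fs), cut n t = apply rho t -> height t <= n.
Proof.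
  induction n; intros t rho E.
  - destruct t as [a|f [|b l]]; simpl; auto. simpl in E. discriminate.
  - destruct t as [a|f args]; [simpl; lia|].
    simpl in E. injection E as E.
    assert (K : forall a, In a args -> height a + 1 <= S n).
    { intros a Ha. assert (cut n a = apply rho a).
      { clear -E Ha. induction args; [destruct Ha|]. simpl in E. injection E as E1 E2.
        destruct Ha; subst; auto. }
      apply IHn in H. lia. }
    pose proof (height_Fn_bound f args 0 (S n)). rewrite Nat.add_0_r in H.
    apply H; [intros a Ha; specialize (K a Ha); lia | lia].
Qed.

Lemma height_apply (D : nat -> nat) (th : subst Fs) M u : forall k,
  (forall x d, occ_at x d u -> D x = k + d) -> height u + k <= M ->
  (forall x d, occ_at x d u -> D x + height (th x) <= M) ->
  height (apply th u) + k <= M.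
Proof.
  induction u as [x|f args IH] using term_ind'; intros k H Hh Ht.
  - simpl. specialize (Ht x 0 (occ_var _ x)). rewrite (H x 0 (occ_var _ x)) in Ht. lia.
  - simpl apply. apply height_Fn_bound; [|simpl in Hh; lia].
    intros b Hb. apply in_map_iff in Hb as [a [<- Ha]].
    rewrite Forall_forall in IH.
    replace (height (apply th a) + S k) with (height (apply th a) + (S k)) by lia.
    apply IH; auto.
    + intros x d Hd. rewrite (H x (S d)). lia. econstructor; eauto.
    + pose proof (height_arg f _ a Ha). lia.
    + intros x d Hd. apply (Ht x (S d)). econstructor; eauto.
Qed.
Lemma flow_height_equiv (p q : flow Fs) : flow_equiv p q -> flow_height q = flow_height p.
Proof.
  intros (r & _ & E1 & E2). unfold flow_height. rewrite E1, E2, !height_rename. reflexivity.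
Qed.

Lemma part1 (f g h : flow Fs) : balanced f -> balanced g -> flow_prod f g h ->
  balanced h /\ flow_height h <= Nat.max (flow_height f) (flow_height g).
Proof.
  intros Bf Bg (f' & g' & th & Ef & Eg & Dis & [Uni Mgu] & Eh).
  pose proof (balanced_equiv _ _ Ef Bf) as Bf'. pose proof (balanced_equiv _ _ Eg Bg) as Bg'.
  rewrite <- (flow_height_equiv _ _ Ef), <- (flow_height_equiv _ _ Eg), (flow_height_equiv _ _ Eh).
  clear Ef Eg Bf Bg f g.
  destruct f' as [u v], g' as [t w]. simpl in *.
  set (P := fun x d => occ_at x d u \/ occ_at x d v \/ occ_at x d t \/ occ_at x d w).
  set (D := fun x => epsilon (inhabits 0) (P x)).
  assert (HD : forall x d, P x d -> D x = d).
  { intros x d Hp. assert (Pe : P x (D x)) by (apply epsilon_spec; eauto).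
    unfold P in Hp, Pe.
    assert (C1 : forall e e', (occ_at x e u \/ occ_at x e v) -> (occ_at x e' t \/ occ_at x e' w) -> False).
    { intros e e' H1 H2. apply (Dis x).
      - destruct H1; [left|right]; eexists; eauto.
      - destruct H2; [left|right]; eexists; eauto. }
    destruct Hp as [Hp|[Hp|[Hp|Hp]]]; destruct Pe as [Pe|[Pe|[Pe|Pe]]];
      solve [ symmetry; eapply Bf'; simpl; eauto
            | symmetry; eapply Bg'; simpl; eauto
            | exfalso; eapply C1; eauto ]. }
  assert (HDu : forall x d, occ_at x d u -> D x = 0 + d) by (intros; apply HD; unfold P; tauto).
  assert (HDv : forall x d, occ_at x d v -> D x = 0 + d) by (intros; apply HD; unfold P; tauto).
  assert (HDt : forall x d, occ_at x d t -> D x = 0 + d) by (intros; apply HD; unfold P; tauto).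
  assert (HDw : forall x d, occ_at x d w -> D x = 0 + d) by (intros; apply HD; unfold P; tauto).
  destruct (Mgu (fun x => tagd (D x) (th x))) as [rho Hrho].
  { unfold unifier. rewrite <- (tag_apply D th v 0 HDv), <- (tag_apply D th t 0 HDt).
    unfold unifier in Uni. rewrite Uni. reflexivity. }
  assert (Key : forall x d1 a d2, P x d1 -> occ_at a d2 (th x) ->
            rho a = V (Cantor.to_nat (a, d1 + d2))).
  { intros x d1 a d2 Hp Ho. rewrite <- (HD x d1 Hp). eapply tag_rho; eauto. }
  set (M := Nat.max (flow_height (u, v)) (flow_height (t, w))).
  assert (Hhu : height u <= M) by (unfold M, flow_height; simpl; lia).
  assert (Hhv : height v <= M) by (unfold M, flow_height; simpl; lia).
  assert (Hht : height t <= M) by (unfold M, flow_height; simpl; lia).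
  assert (Hhw : height w <= M) by (unfold M, flow_height; simpl; lia).
  destruct (Mgu (fun x => cut (M - D x) (th x))) as [rho' Hrho'].
  { unfold unifier.
    rewrite <- (cut_apply D th M v 0 HDv) by lia.
    rewrite <- (cut_apply D th M t 0 HDt) by lia.
    unfold unifier in Uni. rewrite Uni. reflexivity. }
  assert (Hx : forall x d, P x d -> D x + height (th x) <= M).
  { intros x d Hp. pose proof (cut_height _ _ _ (Hrho' x)).
    assert (d <= M).
    { destruct Hp as [H1|[H1|[H1|H1]]]; apply occ_height in H1; lia. }
    rewrite (HD x d Hp) in *. lia. }
  split.
  - eapply balanced_equiv; [exact Eh|].
    assert (K : forall a d, occ_at a d (apply th u) \/ occ_at a d (apply th w) ->
                rho a = V (Cantor.to_nat (a, d))).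
    { intros a d [H1|H1]; apply occ_apply in H1 as (x & d1 & d2 & H1 & H2 & ->);
        eapply Key; eauto; unfold P; tauto. }
    intros a d d' H1 H2. simpl in H1, H2.
    pose proof (K a d H1) as K1. pose proof (K a d' H2) as K2. rewrite K1 in K2.
    assert (K3 : Cantor.to_nat (a, d) = Cantor.to_nat (a, d')) by congruence.
    apply Cantor.to_nat_inj in K3. congruence.
  - unfold flow_height at 1. simpl. fold M.
    assert (A1 : height (apply th u) + 0 <= M).
    { apply (height_apply D); auto; [rewrite Nat.add_0_r; auto|].
      intros x d Hd. eapply Hx. unfold P; eauto. }
    assert (A2 : height (apply th w) + 0 <= M).
    { apply (height_apply D); auto; [rewrite Nat.add_0_r; auto|].
      intros x d Hd. eapply Hx. unfold P; eauto. }
    lia.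
Qed.
End S.

Theorem mainTheorem4 (F : Type) :
  (forall f g h : flow F,
      is_flow f -> is_flow g -> balanced f -> balanced g ->
      flow_prod f g h ->
      balanced h /\ flow_height h <= Nat.max (flow_height f) (flow_height g)) /\
  (forall W1 W2 H : wiring F,
      is_wiring W1 -> is_wiring W2 ->
      balanced_wiring W1 -> balanced_wiring W2 ->
      wiring_prod W1 W2 H -> balanced_wiring H) /\
  balanced_wiring (@nil (flow F)) /\
  (forall W1 W2 H : wiring F,
      balanced_wiring W1 -> balanced_wiring W2 ->
      wiring_sum W1 W2 H -> balanced_wiring H).
Proof.
  split; [|split; [|split]].
  - intros f g h _ _ Bf Bg Hp. exact (part1 _ _ _ _ Bf Bg Hp).
  - intros W1 W2 H _ _ B1 B2 [HP _] h Hh.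
    destruct (HP h Hh) as (f & g & Hf & Hg & Hfg).
    exact (proj1 (part1 _ _ _ _ (B1 f Hf) (B2 g Hg) Hfg)).
  - intros f [].
  - intros W1 W2 H B1 B2 HS h Hh.
    destruct (proj1 (HS h)) as (f' & Hf' & Eq).
    { exists h. split; auto. exists (fun x => x). split.
      - exists (fun x => x). auto.
      - destruct h as [a b]. unfold rename. simpl.
        assert (I : forall t : term F, t = apply (fun x => Var F x) t).
        { induction t as [x|f args IH] using (term_ind' F); auto. simpl. f_equal.
          rewrite Forall_forall in IH. rewrite map_ext_in with (g := fun t => t); [symmetry; apply map_id|].
          intros; symmetry; auto. }
        split; apply I. }
    eapply balanced_equiv_back; [exact Eq|]. destruct Hf' as [Hf'|Hf']; auto.
Qed.
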